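(* Let $T$ be a compactum, $\mathbf a,\mathbf b,\mathbf c$ entourages of $T$, $p\in T$ and $k>2$. If $\mathbf a-\mathbf b-p\ (k)$ and $\mathbf b-\mathbf c-p\ (k)$, then $\mathbf a-\mathbf c-p\ (k)$.
   Context: Let $T$ be a compact Hausdorff space, $S^2T$ the space of unordered pairs of points of $T$ (diagonal allowed), $\Delta^2T$ the diagonal. An entourage is a neighborhood of $\Delta^2T$ in $S^2T$. For an entourage $\mathbf e$, $\Delta_{\mathbf e}$ is the graph distance on $T$ of the graph with vertex set $T$ and edges the pairs in $\mathbf e$; for sets, $\Delta_{\mathbf e}(a,b)=\inf$ over $x\in a,y\in b$ and $\widetilde\Delta_{\mathbf e}(a,b)=\sup$. A set is $\mathbf e$-small if its $\Delta_{\mathbf e}$-diameter is $\le1$. Entourages $\mathbf a,\mathbf b$ are unlinked ($\mathbf a\bowtie\mathbf b$) if $T=a\cup b$ for some $\mathbf a$-small $a$ and $\mathbf b$-small $b$, linked otherwise. Standing conventions: every entourage considered is linked with itself and $T$ has $\Delta_{\mathbf a}$-diameter $>4$. For $\mathbf a\bowtie\mathbf b$, $\mathrm{sh}_{\mathbf a}\mathbf b=\bigcap\{a: a\ \mathbf a\text{-small},\ T\setminus a\ \mathbf b\text{-small}\}$. For $p\in T$, $\mathbf a-\mathbf b-p\ (k)$ means $\mathbf a\bowtie\mathbf b$ and $\Delta_{\mathbf b}(\mathrm{sh}_{\mathbf b}\mathbf a,b)>k$ for every $\mathbf b$-small neighborhood $b$ of $p$. *)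

(* Defs.v *)
From Stdlib Require Import List Arith.

Definition is_topology {T : Type} (op : (T -> Prop) -> Prop) : Prop :=
  op (fun _ => True) /\
  op (fun _ => False) /\
  (forall U V, op U -> op V -> op (fun x => U x /\ V x)) /\
  (forall F : (T -> Prop) -> Prop, (forall U, F U -> op U) ->
     op (fun x => exists U, F U /\ U x)).

Definition compact_sp {T : Type} (op : (T -> Prop) -> Prop) : Prop :=
  forall (I : Type) (U : I -> T -> Prop),
    (forall i, op (U i)) -> (forall x, exists i, U i x) ->
    exists l : list I, forall x, exists i, In i l /\ U i x.

Definition hausdorff {T : Type} (op : (T -> Prop) -> Prop) : Prop :=
  forall x y : T, x <> y ->
    exists U V, op U /\ op V /\ U x /\ V y /\ (forall z, U z -> V z -> False).

Definition compactum {T : Type} (op : (T -> Prop) -> Prop) : Prop :=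
  is_topology op /\ compact_sp op /\ hausdorff op.

Definition prod_open {T : Type} (op : (T -> Prop) -> Prop) (W : T -> T -> Prop) : Prop :=
  forall x y, W x y -> exists U V, op U /\ op V /\ U x /\ V y /\
    (forall u v, U u -> V v -> W u v).

Definition nbhd {T : Type} (op : (T -> Prop) -> Prop) (B : T -> Prop) (p : T) : Prop :=
  exists U, op U /\ U p /\ (forall x, U x -> B x).

(* A subset of S^2 T is encoded by its preimage in T x T, i.e. a symmetric
   relation.  S^2 T carries the quotient topology, so a symmetric relation e
   is a neighbourhood of the diagonal of S^2 T iff it contains an open
   (product topology) subset W of T x T containing the diagonal. *)
Definition entourage {T : Type} (op : (T -> Prop) -> Prop) (e : T -> T -> Prop) : Prop :=
  (forall x y, e x y -> e y x) /\
  exists W, prod_open op W /\ (forall x, W x x) /\ (forall x y, W x y -> e x y).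

(* walk e n x y : there is an e-path of at most n edges from x to y,
   i.e. Delta_e(x,y) <= n *)
Inductive walk {T : Type} (e : T -> T -> Prop) : nat -> T -> T -> Prop :=
  | walk_refl : forall n x, walk e n x x
  | walk_step : forall n x y z, walk e n x y -> e y z -> walk e (S n) x z.

Definition dist_le {T : Type} (e : T -> T -> Prop) (x y : T) (n : nat) : Prop :=
  walk e n x y.

(* Delta_e(A,B) > k  (infimum over x in A, y in B; distances are in N u {oo},
   so the infimum exceeds k iff every distance does) *)
Definition setdist_gt {T : Type} (e : T -> T -> Prop) (A B : T -> Prop) (k : nat) : Prop :=
  forall x y, A x -> B y -> ~ dist_le e x y k.

Definition small {T : Type} (e : T -> T -> Prop) (A : T -> Prop) : Prop :=
  forall x y, A x -> A y -> dist_le e x y 1.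

Definition diam_gt4 {T : Type} (e : T -> T -> Prop) : Prop :=
  exists x y : T, ~ dist_le e x y 4.

Definition unlinked {T : Type} (a b : T -> T -> Prop) : Prop :=
  exists A B : T -> Prop, small a A /\ small b B /\ (forall x, A x \/ B x).

Definition linked {T : Type} (a b : T -> T -> Prop) : Prop := ~ unlinked a b.

Definition sh {T : Type} (a b : T -> T -> Prop) : T -> Prop :=
  fun x => forall A : T -> Prop, small a A -> small b (fun y => ~ A y) -> A x.

Definition abp {T : Type} (op : (T -> Prop) -> Prop)
    (a b : T -> T -> Prop) (p : T) (k : nat) : Prop :=
  unlinked a b /\
  forall B : T -> Prop, small b B -> nbhd op B p -> setdist_gt b (sh b a) B k.

(* standing conventions on every entourage considered *)
Definition std_entourage {T : Type} (op : (T -> Prop) -> Prop) (e : T -> T -> Prop) : Prop :=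
  entourage op e /\ linked e e /\ diam_gt4 e.

(* Main.v *)
Require Import Defs.
From Stdlib Require Import List Arith Lia Classical.

Lemma walk_mono {T : Type} (e : T -> T -> Prop) n x y :
  walk e n x y -> forall m, n <= m -> walk e m x y.
Proof.
  induction 1 as [n x|n x y z W IH E]; intros m Hm.
  - constructor.
  - destruct m as [|m]; [lia|]. apply walk_step with y; auto. apply IH; lia.
Qed.

Lemma walk_trans {T : Type} (e : T -> T -> Prop) n x y :
  walk e n x y -> forall m z, walk e m y z -> walk e (m + n) x z.
Proof.
  intros W1 m z W2. induction W2 as [m y|m y w z W IH E].
  - apply walk_mono with n; auto; lia.
  - simpl. apply walk_step with w; auto.
Qed.

Lemma sh_ne {T : Type} (a b : T -> T -> Prop) :
  diam_gt4 a -> linked b b -> exists x, sh b a x.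
Proof.
  intros [u [v Huv]] Hl.
  destruct (classic (sh b a u)) as [Hu|Hu]; [eauto|].
  destruct (classic (sh b a v)) as [Hv|Hv]; [eauto|].
  exfalso. unfold sh in Hu, Hv.
  apply not_all_ex_not in Hu as [A1 H1].
  apply not_all_ex_not in Hv as [A2 H2].
  destruct (classic (small b A1)) as [S1|S1]; [|tauto].
  destruct (classic (small a (fun y => ~ A1 y))) as [S1'|S1']; [|tauto].
  destruct (classic (small b A2)) as [S2|S2]; [|tauto].
  destruct (classic (small a (fun y => ~ A2 y))) as [S2'|S2']; [|tauto].
  assert (nu : ~ A1 u) by tauto. assert (nv : ~ A2 v) by tauto.
  apply Hl. exists A1, A2. repeat split; auto.
  intro x. destruct (classic (A1 x)); auto. destruct (classic (A2 x)); auto.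
  exfalso. apply Huv.
  pose proof (walk_trans _ _ _ _ (S1' u x nu H) _ _ (S2' x v H0 nv)).
  apply walk_mono with (1+1); auto.
Qed.

Theorem lemma3p17 (T : Type) (op : (T -> Prop) -> Prop) (HT : compactum op)
  (a b c : T -> T -> Prop)
  (Ha : std_entourage op a) (Hb : std_entourage op b) (Hc : std_entourage op c)
  (p : T) (k : nat) (Hk : 2 < k) :
  abp op a b p k -> abp op b c p k -> abp op a c p k.
Proof.
  intros [Hab H1] [Hbc H2].
  destruct Ha as [_ [_ Hda]]. destruct Hb as [_ [Hlb Hdb]].
  destruct Hc as [[_ [W [HW [HWd HWc]]]] [Hlc _]].
  destruct HT as [[_ [_ [Hint _]]] _].
  destruct (sh_ne a b Hda Hlb) as [x0 Hx0].
  destruct (sh_ne b c Hdb Hlc) as [y0 Hy0].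
  destruct (HW p p (HWd p)) as [U [V [HU [HV [Up [Vp HUV]]]]]].
  set (M := fun x => U x /\ V x).
  assert (HMs : small c M).
  { intros x y [Ux _] [_ Vy]. apply walk_step with x; [constructor|]. auto. }
  assert (HMn : nbhd op M p).
  { exists M. split; [apply Hint; auto|]. split; [split; auto|auto]. }
  assert (S1 : forall C, small c C -> small b (fun y => ~ C y) ->
                 small a (fun y => ~ C y)).
  { intros C HC HY.
    assert (MY : forall m, M m -> ~ C m).
    { intros m Hm Cm. apply (H2 M HMs HMn y0 m Hy0 Hm).
      apply walk_mono with 1; [|lia]. apply HC; auto. apply Hy0; auto. }
    assert (HYn : nbhd op (fun y => ~ C y) p).
    { exists M. split; [apply Hint; auto|]. split; [split; auto|auto]. }
    pose proof (H1 _ HY HYn) as Hsd.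
    destruct Hab as [A0 [B0 [HA0 [HB0 Hcov]]]].
    assert (sB : small a (fun y => ~ B0 y)).
    { intros x y Hx Hy. apply HA0; [destruct (Hcov x)|destruct (Hcov y)]; tauto. }
    assert (YA : forall z, ~ C z -> A0 z).
    { intros z Hz. destruct (Hcov z) as [|Bz]; auto. exfalso.
      apply (Hsd x0 z Hx0 Hz). apply walk_mono with 1; [|lia].
      apply HB0; auto. apply Hx0; auto. }
    intros x y Hx Hy. apply HA0; auto. }
  split.
  - destruct Hbc as [B1 [C1 [HB1 [HC1 Hcov]]]].
    exists (fun y => ~ C1 y), C1. split; [|split; [auto|]].
    + apply S1; auto. intros x y Hx Hy. apply HB1;
        [destruct (Hcov x)|destruct (Hcov y)]; tauto.
    + intro x. destruct (classic (C1 x)); auto.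
  - intros C' HC' HCn x y Hx Hy Hd.
    apply (H2 C' HC' HCn x y); auto.
    intros C HC HCb. apply Hx; auto.
Qed.
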